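(* Let $n\geq1$ and let $F:\mathbb{C}\to\mathbb{C}$ be additive. Then $F$ satisfies $$F(\alpha^{n+1})=\sum_{i=1}^{n}\binom{n+1}{i}(-1)^{n-i}\,\alpha^{n+1-i}\,F(\alpha^i)\quad\text{for all }\alpha\in\mathbb{C}$$ if and only if for all $x_1,\ldots,x_{n+1}\in\mathbb{C}$ $$F(x_1\cdots x_{n+1})=\sum_{k=1}^{n}(-1)^{k+1}\sum_{1\leq i_1<\cdots<i_k\leq n+1}x_{i_1}\cdots x_{i_k}\,F\big(x_1\cdots\widehat{x_{i_1}}\cdots\widehat{x_{i_k}}\cdots x_{n+1}\big),$$ where $\widehat{x_j}$ means that the factor $x_j$ is omitted. *)

(* Defs.v *)
From HB Require Import structures.
From mathcomp Require Export all_boot all_order all_algebra.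
From mathcomp Require Export complex.
From mathcomp Require Export Rstruct.
From Stdlib Require Rdefinitions.
Set Implicit Arguments.
Unset Strict Implicit.
Unset Printing Implicit Defensive.
Export Order.TTheory GRing.Theory Num.Theory.
Export ComplexField.

Notation CC := (complex Rdefinitions.R).

Definition additive_map (F : CC -> CC) : Prop :=
  forall x y : CC, F (x + y)%R = (F x + F y)%R.

(* Main.v *)
Require Import Defs.
From mathcomp Require Import ring.
Set Implicit Arguments.
Unset Strict Implicit.
Unset Printing Implicit Defensive.
Local Open Scope ring_scope.

Definition Top (a : CC) (G : CC -> CC) : CC -> CC := fun z => G (a * z) - a * G z.

Lemma add0 (G : CC -> CC) : additive_map G -> G 0 = 0.
Proof. by move=> hG; apply: (@addrI _ (G 0)); rewrite addr0 -hG addr0. Qed.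

Lemma add_nat (G : CC -> CC) (t : nat) (z : CC) : additive_map G ->
  G (t%:R * z) = t%:R * G z.
Proof.
move=> hG; elim: t => [|t IH]; first by rewrite !mul0r add0.
by rewrite -addn1 !natrD !mulrDl !mul1r hG IH.
Qed.

Lemma Top_add a G : additive_map G -> additive_map (Top a G).
Proof. by move=> hG x y; rewrite /Top mulrDr !hG mulrDr addrACA opprD. Qed.

Lemma iter_add k a G : additive_map G -> additive_map (iter k (Top a) G).
Proof. by move=> hG; elim: k => //= k IH; apply: Top_add. Qed.

Lemma Top_ext a (G1 G2 : CC -> CC) : G1 =1 G2 -> Top a G1 =1 Top a G2.
Proof. by move=> e z; rewrite /Top !e. Qed.

Lemma iter_ext k a (G1 G2 : CC -> CC) : G1 =1 G2 -> iter k (Top a) G1 =1 iter k (Top a) G2.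
Proof. by move=> e; elim: k => //= k IH; apply: Top_ext. Qed.

Lemma TopD a b G z : additive_map G -> Top (a + b) G z = Top a G z + Top b G z.
Proof. by move=> hG; rewrite /Top mulrDl hG mulrDl addrACA opprD. Qed.

Lemma Top_comm a b G z : Top a (Top b G) z = Top b (Top a G) z.
Proof.
rewrite /Top !mulrBr !mulrA [b * a]mulrC opprB.
rewrite [a * b]mulrC; ring.
Qed.

Lemma Top_plus a (G1 G2 : CC -> CC) z :
  Top a (fun u => G1 u + G2 u) z = Top a G1 z + Top a G2 z.
Proof. by rewrite /Top mulrDr addrACA opprD. Qed.

Lemma Top_scale a c (G : CC -> CC) z : Top a (fun u => c * G u) z = c * Top a G z.
Proof. by rewrite /Top mulrBr !mulrA [a * c]mulrC. Qed.

Lemma iter_plus k a (G1 G2 : CC -> CC) z :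
  iter k (Top a) (fun u => G1 u + G2 u) z = iter k (Top a) G1 z + iter k (Top a) G2 z.
Proof.
elim: k z => //= k IH z.
rewrite (Top_ext a IH z); exact: Top_plus.
Qed.

Lemma iter_scale k a c (G : CC -> CC) z :
  iter k (Top a) (fun u => c * G u) z = c * iter k (Top a) G z.
Proof.
elim: k z => //= k IH z.
rewrite (Top_ext a IH z); exact: Top_scale.
Qed.

Lemma iter_Top_comm k a b G z :
  iter k (Top a) (Top b G) z = Top b (iter k (Top a) G) z.
Proof.
elim: k z => //= k IH z.
by rewrite (Top_ext a IH z) Top_comm.
Qed.

Lemma iter_Top_nat k t b G z : additive_map G ->
  iter k (Top (t%:R * b)) G z = t%:R ^+ k * iter k (Top b) G z.
Proof.
move=> hG; elim: k z => [|k IH] z /=; first by rewrite mul1r.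
have -> : Top (t%:R * b) (iter k (Top (t%:R * b)) G) z =
          t%:R * Top b (iter k (Top (t%:R * b)) G) z.
  have hH := iter_add k (t%:R * b) hG.
  by rewrite /Top -!mulrA (add_nat _ _ hH) mulrBr mulrA.
rewrite (Top_ext b IH z) Top_scale exprS mulrA.
done.
Qed.

Lemma iter_binom m u v G z : additive_map G ->
  iter m (Top (u + v)) G z =
  \sum_(0 <= k < m.+1) 'C(m, k)%:R * iter k (Top v) (iter (m - k) (Top u) G) z.
Proof.
elim: m G z => [|m IH] G z hG.
  by rewrite big_nat1 /= mul1r.
rewrite iterSr IH; last exact: Top_add.
have E : forall k, iter k (Top v) (iter (m - k) (Top u) (Top (u + v) G)) z =
   iter k (Top v) (iter (m - k).+1 (Top u) G) z +
   iter k.+1 (Top v) (iter (m - k) (Top u) G) z.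
  move=> k.
  have H : iter (m - k) (Top u) (Top (u + v) G) =1
     (fun w => iter (m - k).+1 (Top u) G w + Top v (iter (m - k) (Top u) G) w).
    move=> w; rewrite (iter_ext _ u (fun w => @TopD u v G w hG)) iter_plus.
    by rewrite -iterSr iter_Top_comm.
  by rewrite (iter_ext k v H z) iter_plus -iterSr.
under eq_bigr => k _ do rewrite E mulrDr.
rewrite big_split /= [in RHS]big_nat_recl // bin0 mul1r subn0.
under [in RHS]eq_bigr => k _ do rewrite subSS binS natrD mulrDl.
rewrite [in RHS]big_split /= addrA; congr (_ + _).
rewrite big_nat_recl // bin0 mul1r subn0 [in RHS]big_nat_recr //= bin_small // mul0r addr0.
congr (_ + _); apply: eq_big_nat => k /andP [_ km].
by rewrite -(subnSK km).
Qed.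

Lemma poly_coef0 m (c : nat -> CC) :
  (forall t : nat, \sum_(0 <= k < m) c k * (t%:R) ^+ k = 0) ->
  forall k, (k < m)%N -> c k = 0.
Proof.
move=> h.
pose p := \poly_(k < m) c k.
have hp : forall t : nat, p.[t%:R] = 0.
  by move=> t; rewrite horner_poly -(big_mkord xpredT (fun k => c k * t%:R ^+ k)).
have p0 : p = 0.
  apply/eqP; apply/negPn/negP => pn0.
  have := @max_poly_roots _ p [seq i%:R | i <- iota 0 m] pn0.
  rewrite size_map size_iota ltnNge size_poly /=.
  move=> H; suff : false by []; apply: H.
    by apply/allP => r /mapP [i _ ->]; apply/rootP; exact: hp.
  rewrite map_inj_uniq ?iota_uniq // => i j /eqP.
  by rewrite eqr_nat => /eqP.
move=> k km; have := coef_poly m c k; rewrite km -/p p0 coef0.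
by move=> <-.
Qed.

Lemma sum_subsetU1 (T:finType) (V:zmodType) (i:T) (A: {set T}) (f : {set T} -> V) :
  i \notin A ->
  \sum_(S : {set T} | S \subset i |: A) f S =
  \sum_(S : {set T} | S \subset A) f S + \sum_(S : {set T} | S \subset A) f (i |: S).
Proof.
move=> iA; rewrite (bigID (fun S : {set T} => i \in S)) /= addrC; congr (_ + _).
  apply: eq_bigl => S; apply/idP/idP.
    case/andP=> /subsetP sS iS; apply/subsetP=> y yS.
    have := sS y yS; rewrite in_setU1; case/orP=> // /eqP yi.
    by rewrite -yi yS in iS.
  move=> /subsetP sS; apply/andP; split.
    by apply/subsetP=> y yS; rewrite in_setU1 sS ?orbT.
  by apply/negP=> /sS; rewrite (negbTE iA).
rewrite (reindex_onto (fun S : {set T} => i |: S) (fun S => S :\ i)) /=.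
  apply: eq_bigl => S; apply/idP/idP.
    case/andP=> /andP [/subsetP sS _] /eqP e; apply/subsetP=> y yS.
    have yi : y != i.
      by apply/eqP=> yi; move: yS; rewrite -e yi !inE eqxx.
    have := sS y; rewrite !inE (negbTE yi) yS orbT /=; exact.
  move=> /subsetP sS; rewrite setU11 andbT; apply/andP; split.
    by apply/subsetP=> y; rewrite !inE; case/orP=> [->//|/sS ->]; rewrite orbT.
  apply/eqP/setP=> y; rewrite !inE; case: eqP => // ->.
  by apply/esym/negP=> /sS; rewrite (negbTE iA).
by move=> S /andP [_ iS]; rewrite setD1K.
Qed.

Definition Psi N (G : CC -> CC) (x : 'I_N -> CC) (A : {set 'I_N}) (w : CC) : CC :=
  \sum_(S : {set 'I_N} | S \subset A)
    (-1) ^+ #|S| * (\prod_(j in S) x j) * G (w * \prod_(j in A :\: S) x j).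

Lemma Psi_U1 N (G : CC -> CC) (x : 'I_N -> CC) (A : {set 'I_N}) i (w : CC) : i \notin A ->
  Psi G x (i |: A) w = Top (x i) (Psi G x A) w.
Proof.
move=> iA; rewrite /Psi /Top sum_subsetU1 // mulr_sumr -sumrN; congr (_ + _).
  apply: eq_bigr => S sA.
  have iS : i \notin S by apply/negP=> /(subsetP sA); rewrite (negbTE iA).
  have -> : (i |: A) :\: S = i |: (A :\: S).
    by apply/setP=> y; rewrite !inE; case: eqP => // ->; rewrite iS.
  rewrite big_setU1 /=; last by rewrite !inE negb_and iA orbT.
  by rewrite mulrCA mulrA.
apply: eq_bigr => S sA.
have iS : i \notin S by apply/negP=> /(subsetP sA); rewrite (negbTE iA).
have -> : (i |: A) :\: (i |: S) = A :\: S.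
  by apply/setP=> y; rewrite !inE; case: eqP => // ->; rewrite (negbTE iA) andbF.
rewrite cardsU1 iS big_setU1 //= exprS.
by rewrite !mulrA mulN1r !mulNr [x i * _]mulrC.
Qed.

Lemma Psi_set0 N (G : CC -> CC) (x : 'I_N -> CC) w : Psi G x set0 w = G w.
Proof.
rewrite /Psi (big_pred1 set0) => [|S]; last by rewrite subset0.
by rewrite cards0 expr0 setD0 !big_set0 !mul1r mulr1.
Qed.

Lemma Psi_ext N (G1 G2 : CC -> CC) (x : 'I_N -> CC) (A : {set 'I_N}) (w : CC) : G1 =1 G2 -> Psi G1 x A w = Psi G2 x A w.
Proof. by move=> e; apply: eq_bigr => S _; rewrite e. Qed.

Lemma Psi_Top N (G : CC -> CC) (x : 'I_N -> CC) (A : {set 'I_N}) (b w : CC) :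
  Psi (Top b G) x A w = Top b (Psi G x A) w.
Proof.
rewrite /Psi /Top mulr_sumr -sumrB; apply: eq_bigr => S _.
by rewrite mulrBr !mulrA; congr (_ - _ * _); rewrite mulrC !mulrA.
Qed.

Lemma iter_Psi N (G : CC -> CC) (a : CC) m :
  forall (A : {set 'I_N}) w, #|A| = m -> iter m (Top a) G w = Psi G (fun _ => a) A w.
Proof.
elim: m => [|m IH] A w hA.
  by move/eqP: hA; rewrite cards_eq0 => /eqP ->; rewrite Psi_set0.
have : (0 < #|A|)%N by rewrite hA.
case/card_gt0P => i iA.
rewrite -(setD1K iA) Psi_U1; last by rewrite !inE eqxx.
rewrite /= (Top_ext a (fun w => IH (A :\ i) w _)) //.
by move: hA; rewrite (cardsD1 i A) iA add1n => -[].
Qed.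

Lemma polar N (x : 'I_N -> CC) m : forall G, additive_map G ->
  (forall a, iter m (Top a) G 1 = 0) ->
  forall A : {set 'I_N}, #|A| = m -> Psi G x A 1 = 0.
Proof.
elim: m => [|m IH] G hG hdiag A hA.
  move/eqP: hA; rewrite cards_eq0 => /eqP ->; rewrite Psi_set0.
  exact: (hdiag 0).
have : (0 < #|A|)%N by rewrite hA.
case/card_gt0P => i iA.
rewrite -(setD1K iA) Psi_U1; last by rewrite !inE eqxx.
rewrite -Psi_Top; apply: IH.
- exact: Top_add.
- move=> a; rewrite iter_Top_comm.
  set b := x i.
  pose c k := 'C(m.+1, k)%:R * iter k (Top b) (iter (m.+1 - k) (Top a) G) 1.
  have hc : forall t : nat, \sum_(0 <= k < m.+2) c k * (t%:R) ^+ k = 0.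
    move=> t; rewrite -[RHS](hdiag (a + t%:R * b)) iter_binom //.
    apply: eq_bigr => k _; rewrite /c iter_Top_nat; last exact: iter_add.
    by rewrite -!mulrA [_ ^+ k * _]mulrC.
  have := poly_coef0 hc (isT : (1 < m.+2)%N).
  rewrite /c bin1 subSS subn0 /= => /eqP; rewrite mulf_eq0 pnatr_eq0 /=.
  by move/eqP.
- by move: hA; rewrite (cardsD1 i A) iA add1n => -[].
Qed.
Lemma prod_const_ord N (a : CC) : \prod_(j < N) a = a ^+ N.
Proof. by rewrite -(big_mkord xpredT (fun _ => a)) prodr_const_nat subn0. Qed.
Lemma prod_setT (T : finType) (x : T -> CC) : \prod_(j in [set: T]) x j = \prod_j x j.
Proof. by apply: eq_bigl => j; rewrite in_setT. Qed.
Lemma sum_by_card (T : finType) (V : zmodType) (g : {set T} -> V) :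
  \sum_(S : {set T}) g S = \sum_(0 <= k < #|T|.+1) \sum_(S : {set T} | #|S| == k) g S.
Proof.
under [RHS]eq_bigr do rewrite big_mkcond.
rewrite exchange_big /=; apply: eq_bigr => S _.
rewrite -big_mkcond big_mkord (big_pred1 (inord #|S|)) //= => k.
rewrite eq_sym; apply/eqP/eqP => [<-|->]; first by rewrite inord_val.
by rewrite inordK // ltnS max_card.
Qed.

Lemma Psi_full n (F : CC -> CC) (x : 'I_n.+1 -> CC) :
  Psi F x setT 1 =
  F (\prod_(j < n.+1) x j) -
  \sum_(1 <= k < n.+1)
        (-1) ^+ k.+1 *
        \sum_(S : {set 'I_n.+1} | #|S| == k)
          (\prod_(j in S) x j) * F (\prod_(j in ~: S) x j)
  + (-1) ^+ n.+1 * (\prod_(j < n.+1) x j) * F 1.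
Proof.
rewrite /Psi.
under eq_bigl => S do rewrite subsetT.
under eq_bigr => S _ do rewrite setTD mul1r.
rewrite sum_by_card card_ord big_ltn // big_nat_recr //=.
rewrite (big_pred1 set0); last by move=> S; rewrite cards_eq0.
rewrite (big_pred1 setT); last first.
  move=> S; apply/eqP/eqP => [h|->]; last by rewrite cardsT card_ord.
  by apply/eqP; rewrite eqEcard subsetT cardsT card_ord h leqnn.
rewrite cards0 expr0 mul1r big_set0 mul1r setC0 !prod_setT.
rewrite cardsT card_ord setCT big_set0 -addrA; congr (_ + _).
rewrite -[in RHS]sumrN; congr (_ + _); apply: eq_bigr => k _.
rewrite mulr_sumr -sumrN; apply: eq_bigr => S /eqP ->.
by rewrite exprS mulN1r mulNr opprK mulrA.
Qed.

Lemma RHS_const n (F : CC -> CC) (a : CC) :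
  \sum_(1 <= k < n.+1)
        (-1) ^+ k.+1 *
        \sum_(S : {set 'I_n.+1} | #|S| == k)
          (\prod_(j in S) (fun _ => a) j) * F (\prod_(j in ~: S) (fun _ => a) j)
  = \sum_(1 <= i < n.+1)
        ('C(n.+1, i))%:R * (-1) ^+ (n - i) * a ^+ (n.+1 - i) * F (a ^+ i).
Proof.
rewrite [in RHS]big_nat_rev /=; apply: eq_big_nat => k /andP [k1 kn].
have inner : \sum_(S : {set 'I_n.+1} | #|S| == k)
          (\prod_(j in S) (fun _ => a) j) * F (\prod_(j in ~: S) (fun _ => a) j)
        = (a ^+ k * F (a ^+ (n.+1 - k))) *+ 'C(n.+1, k).
  rewrite -[in RHS](card_ord n.+1) -card_draws cardsE -sumr_const.
  apply: eq_bigr => S /eqP hS; rewrite !prodr_const.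
  have hC : #|~: S| = (n.+1 - k)%N.
    have h : (k + #|~: S|)%N = n.+1 by rewrite -hS cardsC card_ord.
    by apply: (@addnI k); rewrite h subnKC // ltnW.
  by rewrite hC hS card_ord.
rewrite inner add1n subSS; case: k k1 kn {inner} => // k _ kn.
have kn' : (k <= n)%N by apply: ltnW.
rewrite bin_sub // subSS subKn // subSn ?leq_subr // subKn //.
rewrite -mulr_natl !exprS !mulN1r opprK.
ring.
Qed.


Theorem mainTheorem8 (n : nat) (hn : (1 <= n)%N) (F : CC -> CC)
    (hF : additive_map F) :
  (forall a : CC,
      F (a ^+ n.+1) =
      \sum_(1 <= i < n.+1)
        ('C(n.+1, i))%:R * (-1) ^+ (n - i) * a ^+ (n.+1 - i) * F (a ^+ i))
  <->
  (forall x : 'I_n.+1 -> CC,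
      F (\prod_(j < n.+1) x j) =
      \sum_(1 <= k < n.+1)
        (-1) ^+ k.+1 *
        \sum_(S : {set 'I_n.+1} | #|S| == k)
          (\prod_(j in S) x j) * F (\prod_(j in ~: S) x j)).
Proof.
split=> [ha|hx]; last first.
  by move=> a; have := hx (fun _ => a); rewrite prod_const_ord RHS_const.
have cardT : #|[set: 'I_n.+1]| = n.+1 by rewrite cardsT card_ord.
have diagE : forall a, iter n.+1 (Top a) F 1 =
    (-1) ^+ n.+1 * a ^+ n.+1 * F 1.
  move=> a; rewrite (iter_Psi F a 1 cardT) Psi_full prod_const_ord RHS_const.
  by rewrite -ha; ring.
have F1 : F 1 = 0.
  have t1 : forall (H : CC -> CC) z, Top 1 H z = 0 by move=> H z; rewrite /Top !mul1r subrr.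
  have := diagE 1; rewrite iterS t1 expr1n mulr1 => /esym/eqP.
  by rewrite mulf_eq0 signr_eq0 => /eqP.
have diag : forall a, iter n.+1 (Top a) F 1 = 0.
  by move=> a; rewrite diagE F1 mulr0.
move=> x; have := polar x hF diag cardT.
rewrite Psi_full F1 mulr0 addr0 => /eqP; rewrite subr_eq0 => /eqP.
done.
Qed.
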